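(* $\lim_{m\to\infty}\frac{\beta_c(m)}{m/2}=1$.
   Context: Let $(\lambda_i)_{i\ge0}$ be the Thue–Morse sequence: $\lambda_0=0$, $\lambda_{2i}=\lambda_i$, $\lambda_{2i+1}=1-\lambda_i$. For $m\in\mathbb{N}$ and $i\ge1$ set $\lambda_i(m)=k+\lambda_i-\lambda_{i-1}$ if $m=2k$ and $\lambda_i(m)=k+\lambda_i$ if $m=2k+1$. $\beta_c(m)$ is the unique solution $\beta>1$ of $\sum_{i=1}^\infty\lambda_i(m)\beta^{-i}=1$. *)

(* Defs.v *)
From Stdlib Require Import Reals ZArith Arith ClassicalEpsilon.
From Coquelicot Require Import Coquelicot.
Open Scope R_scope.

(* Thue--Morse sequence: tm 0 = 0, tm (2i) = tm i, tm (2i+1) = 1 - tm i. *)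
Fixpoint tm_pos (p : positive) : bool :=
  match p with
  | xH => true
  | xO q => tm_pos q
  | xI q => negb (tm_pos q)
  end.

Definition tm_bool (n : nat) : bool :=
  match n with O => false | S _ => tm_pos (Pos.of_nat n) end.

Definition tm (n : nat) : R := if tm_bool n then 1 else 0.

(* lambda_i(m), meaningful for i >= 1:
   m = 2k   : k + lambda_i - lambda_{i-1}
   m = 2k+1 : k + lambda_i *)
Definition lam (m i : nat) : R :=
  if Nat.even m then INR (Nat.div2 m) + tm i - tm (i - 1)
  else INR (Nat.div2 m) + tm i.

Definition is_beta_c (m : nat) (beta : R) : Prop :=
  1 < beta /\ is_series (fun n : nat => lam m (S n) / beta ^ (S n)) 1.

(* beta_c(m): the (unique, per the paper) solution, chosen by epsilon. *)
Definition beta_c (m : nat) : R :=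
  epsilon (inhabits 0) (is_beta_c m).

(* Main.v *)
Require Import Defs.
From Stdlib Require Import Reals.
From Coquelicot Require Import Coquelicot.
From Stdlib Require Import Lra Lia ClassicalEpsilon Ranalysis5.
Open Scope R_scope.

Lemma lam_bounds m i :
  INR (Nat.div2 m) - 1 <= lam m i <= INR (Nat.div2 m) + 1.
Proof.
  unfold lam, tm.
  destruct (Nat.even m); destruct (tm_bool i); destruct (tm_bool (i-1)); lra.
Qed.

Lemma geom_c (c q : R) : 0 <= q < 1 ->
  is_series (fun n => c * q ^ n) (c / (1 - q)).
Proof.
  intros Hq.
  assert (H : is_series (fun n => q ^ n) (/ (1 - q))).
  { apply is_series_geom. rewrite Rabs_right; lra. }
  apply (is_series_scal_l c) in H.
  exact H.
Qed.

Lemma generic_bounds (a : nat -> R) (q Sm L U : R) :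
  0 < q < 1 -> 0 <= L -> (forall n, L <= a n <= U) ->
  is_series (fun n => a n * q ^ (S n)) Sm ->
  L * q <= Sm * (1 - q) <= U * q.
Proof.
  intros Hq HL Ha Hs.
  assert (HSe : Series (fun n => a n * q ^ (S n)) = Sm) by (apply is_series_unique; auto).
  assert (HLs : is_series (fun n => (L * q) * q ^ n) (L * q / (1 - q))) by (apply geom_c; lra).
  assert (HUs : is_series (fun n => (U * q) * q ^ n) (U * q / (1 - q))) by (apply geom_c; lra).
  assert (Hpos : forall n, 0 < q ^ n) by (intro; apply pow_lt; lra).
  assert (H1 : Series (fun n => (L * q) * q ^ n) <= Series (fun n => a n * q ^ (S n))).
  { apply Series_le.
    - intro n. simpl. specialize (Ha n). specialize (Hpos n). split.
      + apply Rmult_le_pos; [apply Rmult_le_pos|]; lra.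
      + replace (L * q * q ^ n) with (L * (q * q ^ n)) by ring.
        apply Rmult_le_compat_r; [apply Rmult_le_pos|]; lra.
    - eexists; eauto. }
  assert (H2 : Series (fun n => a n * q ^ (S n)) <= Series (fun n => (U * q) * q ^ n)).
  { apply Series_le.
    - intro n. simpl. specialize (Ha n). specialize (Hpos n). split.
      + apply Rmult_le_pos; [|apply Rmult_le_pos]; lra.
      + replace (U * q * q ^ n) with (U * (q * q ^ n)) by ring.
        apply Rmult_le_compat_r; [apply Rmult_le_pos|]; lra.
    - eexists; eauto. }
  rewrite HSe in H1, H2.
  rewrite (is_series_unique _ _ HLs) in H1.
  rewrite (is_series_unique _ _ HUs) in H2.
  assert (H1q : 0 < 1 - q) by lra.
  split.
  - apply (Rmult_le_compat_r (1 - q)) in H1; [|lra].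
    unfold Rdiv in H1. rewrite Rmult_assoc, Rinv_l in H1; lra.
  - apply (Rmult_le_compat_r (1 - q)) in H2; [|lra].
    unfold Rdiv in H2. rewrite Rmult_assoc, Rinv_l in H2; lra.
Qed.

Lemma beta_bounds m b : (1 <= Nat.div2 m)%nat -> is_beta_c m b ->
  INR (Nat.div2 m) <= b <= INR (Nat.div2 m) + 2.
Proof.
  intros Hk [Hb Hs].
  set (k := INR (Nat.div2 m)).
  assert (Hk1 : 1 <= k) by (unfold k; change 1 with (INR 1); apply le_INR; auto).
  set (q := / b).
  assert (Hq : 0 < q < 1).
  { unfold q. split. apply Rinv_0_lt_compat; lra.
    rewrite <- Rinv_1. apply Rinv_lt_contravar; lra. }
  assert (Hqb : q * b = 1) by (unfold q; field; lra).
  assert (Hs' : is_series (fun n => lam m (S n) * q ^ (S n)) 1).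
  { eapply is_series_ext; [|exact Hs]. intro n. simpl.
    unfold q. rewrite pow_inv. unfold Rdiv. simpl. rewrite Rinv_mult. reflexivity. }
  destruct (generic_bounds (fun n => lam m (S n)) q 1 (k - 1) (k + 1) Hq)
    as [H1 H2]; [lra| intro n; apply lam_bounds | exact Hs' |].
  assert (E1 : (k - 1) * q * b = k - 1) by (rewrite Rmult_assoc, Hqb; ring).
  assert (E2 : (k + 1) * q * b = k + 1) by (rewrite Rmult_assoc, Hqb; ring).
  assert (E3 : 1 * (1 - q) * b = b - 1) by (replace (1 * (1 - q) * b) with (b - q * b) by ring; rewrite Hqb; ring).
  apply (Rmult_le_compat_r b) in H1; [|lra].
  apply (Rmult_le_compat_r b) in H2; [|lra].
  lra.
Qed.

Lemma radius_ge (a : nat -> R) (B x : R) : (forall n, Rabs (a n) <= B) -> Rabs x < 1 ->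
  Rbar_lt (Rabs x) (CV_radius a).
Proof.
  intros Ha Hx.
  set (r := (Rabs x + 1) / 2).
  assert (Hr : 0 <= r < 1) by (unfold r; pose proof (Rabs_pos x); lra).
  assert (Hd : CV_disk a r).
  { unfold CV_disk.
    apply (@ex_series_le R_AbsRing R_CompleteNormedModule (fun n => Rabs (a n * r ^ n)) (fun n => B * r ^ n)).
    - intro n. change norm with Rabs. rewrite Rabs_Rabsolu, Rabs_mult.
      rewrite (Rabs_right (r ^ n)) by (apply Rle_ge, pow_le; lra).
      apply Rmult_le_compat_r; [apply pow_le; lra | apply Ha].
    - eexists. apply geom_c. lra. }
  assert (Hle : Rbar_le r (CV_radius a)).
  { unfold CV_radius. destruct (Lub_Rbar_correct (CV_disk a)) as [Hub _].
    apply Hub. exact Hd. }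
  destruct (CV_radius a) as [c| |]; simpl in *; auto; unfold r in Hle; lra.
Qed.

Lemma exists_beta m : (2 <= Nat.div2 m)%nat -> exists b, is_beta_c m b.
Proof.
  intros Hk.
  set (k := INR (Nat.div2 m)).
  assert (Hk2 : 2 <= k) by (unfold k; change 2 with (INR 2); apply le_INR; auto).
  set (a := fun n => lam m (S n)).
  assert (Hab : forall n, k - 1 <= a n <= k + 1) by (intro; apply lam_bounds).
  assert (HaB : forall n, Rabs (a n) <= k + 1).
  { intro n. specialize (Hab n). rewrite Rabs_right; lra. }
  set (G := fun x => x * PSeries a x - 1).
  assert (HGs : forall x, 0 < x < 1 -> is_series (fun n => a n * x ^ (S n)) (x * PSeries a x)).
  { intros x Hx.
    assert (Hr : Rbar_lt (Rabs x) (CV_radius a)) by (apply (radius_ge a (k+1)); auto; rewrite Rabs_right; lra).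
    pose proof (PSeries_correct a x (CV_radius_inside a x Hr)) as H.
    apply is_pseries_R in H.
    apply (is_series_scal_l x) in H.
    eapply is_series_ext; [|exact H]. intro n. simpl. change scal with Rmult. simpl. ring. }
  assert (HGb : forall x, 0 < x < 1 ->
     (k - 1) * x <= (x * PSeries a x) * (1 - x) <= (k + 1) * x).
  { intros x Hx. apply generic_bounds with (a := a); auto; lra. }
  set (x1 := / (k + 3)). set (x2 := 2 / (k + 1)).
  assert (Hx1 : 0 < x1 < 1).
  { unfold x1. split. apply Rinv_0_lt_compat; lra.
    rewrite <- Rinv_1. apply Rinv_lt_contravar; lra. }
  assert (Hx2 : 0 < x2 < 1).
  { unfold x2. split. apply Rdiv_lt_0_compat; lra.
    apply (Rmult_lt_reg_r (k+1)); [lra|]. unfold Rdiv. rewrite Rmult_assoc, Rinv_l; lra. }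
  assert (Hx12 : x1 < x2).
  { unfold x1, x2. apply (Rmult_lt_reg_r ((k+3)*(k+1))); [nra|].
    unfold Rdiv. field_simplify; try lra. }
  assert (HG1 : G x1 < 0).
  { unfold G. destruct (HGb x1 Hx1) as [_ H].
    assert (E : (k + 1) * x1 < 1 - x1).
    { unfold x1. apply (Rmult_lt_reg_r (k+3)); [lra|].
      field_simplify; lra. }
    assert (x1 * PSeries a x1 < 1); [|lra].
    apply (Rmult_lt_reg_r (1 - x1)); lra. }
  assert (HG2 : 0 < G x2).
  { unfold G. destruct (HGb x2 Hx2) as [H _].
    assert (E : 1 - x2 < (k - 1) * x2).
    { unfold x2. apply (Rmult_lt_reg_r (k+1)); [lra|].
      field_simplify; lra. }
    assert (1 < x2 * PSeries a x2); [|lra].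
    apply (Rmult_lt_reg_r (1 - x2)); lra. }
  destruct (IVT_interv G x1 x2) as [z [Hz Gz]]; auto.
  - intros y Hy. unfold G.
    apply continuity_pt_minus; [|apply continuity_pt_const; intros ? ?; reflexivity].
    apply continuity_pt_mult; [apply continuity_pt_id|].
    apply PSeries_continuity. apply (radius_ge a (k+1)); auto.
    rewrite Rabs_right; lra.
  - assert (Hz01 : 0 < z < 1) by lra.
    exists (/ z). split.
    + rewrite <- Rinv_1. apply Rinv_lt_contravar; lra.
    + assert (Hz1 : z * PSeries a z = 1) by (unfold G in Gz; lra).
      rewrite <- Hz1. eapply is_series_ext; [|apply HGs; exact Hz01].
      intro n. unfold a. rewrite pow_inv. unfold Rdiv. rewrite Rinv_inv. reflexivity.
Qed.

Lemma beta_c_bounds m : (4 <= m)%nat ->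
  INR m - 1 <= 2 * beta_c m <= INR m + 4.
Proof.
  intros Hm.
  assert (Hd : m = (2 * Nat.div2 m)%nat \/ m = (2 * Nat.div2 m + 1)%nat).
  { pose proof (Nat.div2_odd m) as H. destruct (Nat.odd m); simpl in H; lia. }
  assert (Hk : (2 <= Nat.div2 m)%nat) by (destruct Hd; lia).
  assert (Hb : is_beta_c m (beta_c m)).
  { unfold beta_c. apply epsilon_spec. apply exists_beta; auto. }
  pose proof (beta_bounds m (beta_c m) ltac:(lia) Hb) as [H1 H2].
  assert (HI : INR m = 2 * INR (Nat.div2 m) \/ INR m = 2 * INR (Nat.div2 m) + 1).
  { destruct Hd as [E|E]; [left|right]; rewrite E at 1;
      rewrite ?plus_INR, mult_INR; simpl; ring. }
  destruct HI; lra.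
Qed.

Lemma inv_n_lim : is_lim_seq (fun n => / INR n) 0.
Proof.
  replace (Finite 0) with (Rbar_inv p_infty) by reflexivity.
  apply is_lim_seq_inv; [apply is_lim_seq_INR | discriminate].
Qed.

Theorem lemma4p9 :
  is_lim_seq (fun m : nat => beta_c m / (INR m / 2)) 1.
Proof.
  apply is_lim_seq_le_le_loc with
    (u := fun m => 1 - / INR m) (w := fun m => 1 + 4 * / INR m).
  - exists 4%nat. intros m Hm.
    pose proof (beta_c_bounds m Hm) as [H1 H2].
    assert (Hm0 : INR 4 <= INR m) by (apply le_INR; auto). simpl in Hm0.
    assert (E : beta_c m / (INR m / 2) = (2 * beta_c m) * / INR m) by (field; lra).
    rewrite E.
    assert (Hi : 0 < / INR m) by (apply Rinv_0_lt_compat; lra).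
    assert (Hii : INR m * / INR m = 1) by (field; lra).
    split; nra.
  - replace (Finite 1) with (Rbar_minus 1 0) by (simpl; f_equal; ring).
    apply is_lim_seq_minus'; [apply is_lim_seq_const | apply inv_n_lim].
  - replace (Finite 1) with (Rbar_plus 1 (4 * 0)) by (simpl; f_equal; ring).
    apply is_lim_seq_plus'; [apply is_lim_seq_const |].
    apply (is_lim_seq_scal_l _ 4 0). apply inv_n_lim.
Qed.
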